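(* Let $C=c_0c_1\dots c_{m-1}c_0$ and $D=(0)(1)\dots(n-1)(0)$ be reflexive digraph cycles with $D$ non-contractible. The subgraph $\mathrm{Mon}_0(C,D)$ of $\mathrm{Hom}(C,D)$ induced by the monotone homomorphisms of wind $0$ is isomorphic to $D$.
   Context: A digraph is a binary relation $\to$ on a finite vertex set; reflexive means every vertex has a loop. A digraph cycle $C=c_0c_1\dots c_{m-1}c_0$ (indices mod $m$, $m\ge3$) has underlying graph the cycle with edges $c_ic_{i+1}$; $D=(0)(1)\dots(n-1)(0)$ has vertex set the integers mod $n$. $D$ is non-contractible if it has length at least $4$ or is a directed $3$-cycle. A homomorphism $\phi:C\to D$ satisfies $u\to v\Rightarrow\phi(u)\to\phi(v)$. $\mathrm{Hom}(C,D)$ is the digraph whose vertices are the homomorphisms $C\to D$ with $\phi\to\phi'$ iff $\phi(u)\to\phi'(v)$ for all arcs $u\to v$ of $C$. Under $\phi$, edge $c_ic_{i+1}$ is increasing, stationary or decreasing as $\phi(c_{i+1})-\phi(c_i)$ is $1,0,-1$ (mod $n$); the increase of $\phi$ is the number of increasing minus the number of decreasing edges, and the wind is the increase divided by $n$. A homomorphism is monotone if every edge is increasing or stationary, or every edge is decreasing or stationary (so the constant maps are exactly the monotone wind-$0$ maps). *)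

(* Defs.v *)
From mathcomp Require Import all_boot all_order all_algebra.
Set Implicit Arguments. Unset Strict Implicit. Unset Printing Implicit Defensive.
Import GRing.Theory Num.Theory.

(* A reflexive digraph cycle with vertex set 'I_k = {0,...,k-1} (integers mod k):
   the vertices are v_0 v_1 ... v_{k-1} v_0 in this cyclic order (ordS is the
   cyclic successor), k >= 3, every vertex has a loop, every arc joins a vertex
   to itself or to a cyclic neighbour, and every cycle edge v_i v_{i+1} carries
   at least one arc (in some direction). *)
Definition refl_dicycle (k : nat) (r : rel 'I_k) : Prop :=
  [/\ 3 <= k,
      forall i, r i i,
      forall i j, r i j -> [|| i == j, j == ordS i | i == ordS j]
    & forall i, r i (ordS i) || r (ordS i) i].

Definition directed_cycle (k : nat) (r : rel 'I_k) : Prop :=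
  (forall i, r i (ordS i) && ~~ r (ordS i) i) \/
  (forall i, r (ordS i) i && ~~ r i (ordS i)).

Definition noncontractible (n : nat) (r : rel 'I_n) : Prop :=
  4 <= n \/ (n = 3 /\ directed_cycle r).

Section HomDefs.
Variables (m n : nat) (rC : rel 'I_m) (rD : rel 'I_n).

Definition is_hom (phi : {ffun 'I_m -> 'I_n}) : bool :=
  [forall u, forall v, rC u v ==> rD (phi u) (phi v)].

Definition edge_diff (phi : {ffun 'I_m -> 'I_n}) (i : 'I_m) : nat :=
  (phi (ordS i) + n - phi i) %% n.

Definition increasing_edge phi i := edge_diff phi i == 1 %% n.
Definition stationary_edge phi i := edge_diff phi i == 0.
Definition decreasing_edge phi i := edge_diff phi i == (n - 1) %% n.

Definition edge_incr (phi : {ffun 'I_m -> 'I_n}) (i : 'I_m) : int :=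
  if increasing_edge phi i then 1%R
  else if decreasing_edge phi i then (-1)%R else 0%R.

Definition increase (phi : {ffun 'I_m -> 'I_n}) : int :=
  (\sum_(i < m) edge_incr phi i)%R.

Definition wind (phi : {ffun 'I_m -> 'I_n}) : rat :=
  ((increase phi)%:~R / n%:R)%R.

Definition monotone (phi : {ffun 'I_m -> 'I_n}) : bool :=
  [forall i, increasing_edge phi i || stationary_edge phi i] ||
  [forall i, decreasing_edge phi i || stationary_edge phi i].

Definition mon0b (phi : {ffun 'I_m -> 'I_n}) : bool :=
  [&& is_hom phi, monotone phi & wind phi == 0%R].

Definition Mon0 := {phi : {ffun 'I_m -> 'I_n} | mon0b phi}.

Definition hom_arc (phi psi : {ffun 'I_m -> 'I_n}) : bool :=
  [forall u, forall v, rC u v ==> rD (phi u) (psi v)].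

Definition Mon0_rel : rel Mon0 := fun p q => hom_arc (val p) (val q).

End HomDefs.

Definition digraph_iso (T U : Type) (r : rel T) (s : rel U) : Prop :=
  exists f : T -> U, bijective f /\ forall x y, r x y = s (f x) (f y).
Arguments Mon0_rel {m n} rC rD.

(* Main.v *)
Require Import Defs.
From mathcomp Require Import all_boot all_order all_algebra.
From mathcomp Require Import zify.
Import GRing.Theory Num.Theory.

Lemma stat_eq (a b n : nat) : a < n -> b < n -> (a + n - b) %% n = 0 -> a = b.
Proof.
move=> ha hb h.
case: (leqP b a) => hab.
  have e : a + n - b = n + (a - b) by lia.
  move: h; rewrite e modnDl modn_small; lia.
have e : a + n - b < n by lia.
move: h; rewrite modn_small //; lia.
Qed.

Lemma const_of_stat m n (phi : {ffun 'I_m -> 'I_n}) (i0 : 'I_m) :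
  val i0 = 0 -> (forall i, stationary_edge phi i) -> forall i, phi i = phi i0.
Proof.
move=> h0 hs.
have step : forall i, phi (ordS i) = phi i.
  move=> i; apply: val_inj; apply: (@stat_eq _ _ n); rewrite ?ltn_ord //.
  by move: (hs i); rewrite /stationary_edge /edge_diff => /eqP.
suff H : forall k (Hk : k < m), phi (Ordinal Hk) = phi i0.
  by move=> [k Hk]; exact: H.
elim=> [|k IH] Hk.
  by congr (phi _); apply: val_inj; rewrite /= h0.
have Hk' : k < m by lia.
rewrite -(IH Hk') -(step (Ordinal Hk')); congr (phi _); apply: val_inj => /=.
by rewrite modn_small.
Qed.

Lemma mon0_stat m n (rC : rel 'I_m) (rD : rel 'I_n) phi :
  3 <= n -> mon0b rC rD phi -> forall i, stationary_edge phi i.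
Proof.
move=> hn /and3P [_ hm hw] i.
have hinc : increase phi = 0%R.
  move: hw; rewrite /wind mulf_eq0 invr_eq0 pnatr_eq0 intr_eq0.
  have -> : (n == 0%N) = false by apply/negbTE; lia.
  by rewrite orbF => /eqP.
have d1 : (1 %% n == (n - 1) %% n) = false.
  by rewrite !modn_small; first apply/negbTE; lia.
have d1' : ((n - 1) %% n == 1 %% n) = false by rewrite eq_sym d1.
have d0 : (0 == 1 %% n) = false by rewrite modn_small //; lia.
have d0' : (0 == (n - 1) %% n) = false by rewrite modn_small; first apply/negbTE; lia.
case/orP: hm => /forallP hm.
- have ge : forall j, (0 <= edge_incr phi j)%R.
    move=> j; rewrite /edge_incr; case/orP: (hm j) => h; first by rewrite h.
    move: h; rewrite /stationary_edge /increasing_edge /decreasing_edge => /eqP ->.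
    by rewrite d0 d0'.
  move: hinc; rewrite /increase (bigD1 i) //=; set S := (X in (_ + X)%R) => hs.
  have : (0 <= S)%R by apply: sumr_ge0 => j _.
  have := ge i.
  case/orP: (hm i) => // hi.
  have ei : edge_incr phi i = 1%R by rewrite /edge_incr hi.
  by rewrite ei in hs => _ ?; exfalso; lia.
- have le : forall j, (edge_incr phi j <= 0)%R.
    move=> j; rewrite /edge_incr; case/orP: (hm j) => h.
      have -> : increasing_edge phi j = false.
        by move: h; rewrite /increasing_edge /decreasing_edge => /eqP ->; rewrite d1'.
      by rewrite h.
    move: h; rewrite /stationary_edge /increasing_edge /decreasing_edge => /eqP ->.
    by rewrite d0 d0'.
  move: hinc; rewrite /increase (bigD1 i) //=; set S := (X in (_ + X)%R) => hs.
  have : (S <= 0)%R by apply: sumr_le0 => j _.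
  case/orP: (hm i) => // hi.
  have ei : edge_incr phi i = (-1)%R.
    rewrite /edge_incr; have -> : increasing_edge phi i = false.
      by move: hi; rewrite /increasing_edge /decreasing_edge => /eqP ->; rewrite d1'.
    by rewrite hi.
  by rewrite ei in hs => ?; exfalso; lia.
Qed.

Lemma const_mon0 m n (rC : rel 'I_m) (rD : rel 'I_n) (a : 'I_n) :
  3 <= n -> (forall i, rD i i) -> mon0b rC rD [ffun=> a].
Proof.
move=> hn hr.
have hs : forall i : 'I_m, edge_diff [ffun=> a] i = 0.
  by move=> i; rewrite /edge_diff !ffunE addKn modnn.
apply/and3P; split.
- by apply/forallP => u; apply/forallP => v; apply/implyP => _; rewrite !ffunE.
- apply/orP; left; apply/forallP => i; apply/orP; right.
  by rewrite /stationary_edge hs.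
- rewrite /wind /increase big1 ?mul0r //= => i _.
  rewrite /edge_incr /increasing_edge /decreasing_edge hs.
  rewrite modn_small; last lia.
  rewrite modn_small; last lia.
  have -> : (0 == 1) = false by [].
  by have -> : (0 == n - 1) = false by apply/negbTE; lia.
Qed.

Theorem fact3p1 (m n : nat) (rC : rel 'I_m) (rD : rel 'I_n) :
  refl_dicycle rC -> refl_dicycle rD -> noncontractible rD ->
  digraph_iso (Mon0_rel rC rD) rD.
Proof.
move=> [hm rCr _ _] [hn rDr _ _] _.
have hm0 : 0 < m by lia.
pose i0 : 'I_m := Ordinal hm0.
pose f := fun p : Mon0 rC rD => val p i0.
pose g := fun a : 'I_n => exist (fun phi => mon0b rC rD phi) [ffun=> a] (@const_mon0 _ _ rC rD a hn rDr).
have hc : forall (p : Mon0 rC rD) i, val p i = f p.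
  move=> [phi hp] i /=; exact: (@const_of_stat _ _ phi i0 erefl (@mon0_stat _ _ rC rD phi hn hp)).
exists f; split.
  exists g.
    move=> p; apply: val_inj => /=; apply/ffunP => i.
    by rewrite ffunE hc.
  by move=> a; rewrite /f /= ffunE.
move=> p q; rewrite /Mon0_rel /hom_arc.
apply/forallP/idP.
  by move=> /(_ i0) /forallP /(_ i0) /implyP; rewrite -!(hc _ i0); apply.
move=> h u; apply/forallP => v; apply/implyP => _.
by rewrite !hc.
Qed.
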